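(* Let $\alpha=(\alpha_1,\ldots,\alpha_m)$ be a partition of $n$ and let $r\in\mathbb{N}$ with $r\ge 1$. Then there is a natural isomorphism of species $$\mathbf{C}_{\alpha}\circ X^r=\mathbf{C}_{\alpha^r},$$ where $\alpha^r$ is the partition of $nr$ containing exactly $r$ copies of each part $\alpha_i$ of $\alpha$.
   Context: A (combinatorial) species is a functor from the category of finite sets with bijections to the category of finite sets with maps; equality of species means natural isomorphism. For a subgroup $H\le S_n$, the molecular species $X^n/H$ is defined by $(X^n/H)[U]=\{\lambda H:\lambda:[n]\to U \text{ a bijection}\}$, where $\lambda H=\{\lambda\circ f: f\in H\}$, and $(X^n/H)[\tau](\lambda H)=(\tau\circ\lambda)H$ for a bijection $\tau:U\to V$. For a partition $\alpha=(\alpha_1,\ldots,\alpha_k)$ of $n$, the standard permutation $\sigma_\alpha\in S_n$ is $(1,\ldots,\alpha_1)(\alpha_1+1,\ldots,\alpha_1+\alpha_2)\cdots$, i.e. the cycles of lengths $\alpha_1,\ldots,\alpha_k$ are filled with $1,\ldots,n$ in increasing order; and $\mathbf{C}_\alpha:=X^n/\langle\sigma_\alpha\rangle$. $X^r$ is the species of lists of length $r$ ($X^r[U]$ = set of bijections $[r]\to U$ if $|U|=r$, empty otherwise). For species $F,G$ with $G[\emptyset]=\emptyset$, the composition is $(F\circ G)[U]=\bigsqcup_{\pi}F[\pi]\times\prod_{B\in\pi}G[B]$, the union over set partitions $\pi$ of $U$, with the induced transport of structure. *)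

(* Defs.v *)
From HB Require Import structures.
From mathcomp Require Import all_boot all_fingroup.

Set Implicit Arguments.
Unset Strict Implicit.
Unset Printing Implicit Defensive.

Record bij (U V : finType) := Bij {
  bfun :> U -> V;
  binv : V -> U;
  bfunK : cancel bfun binv;
  binvK : cancel binv bfun }.

Lemma bij_card (U V : finType) (f : bij U V) : #|U| = #|V|.
Proof. by apply: bij_eq_card; exists (binv f); [exact: bfunK | exact: binvK]. Qed.

Lemma bij_inj (U V : finType) (f : bij U V) : injective f.
Proof. exact: can_inj (bfunK f). Qed.

(* A species: finite set of structures on each finite set U, with transport
   of structures along bijections.  (The functor laws are properties of the
   concrete species below; they are not needed to state natural isomorphism.) *)
Record species := Species {
  sp_obj : finType -> finType;
  sp_tr : forall U V : finType, bij U V -> sp_obj U -> sp_obj V }.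
Arguments sp_tr s {U V}.

Definition species_iso (F G : species) : Prop :=
  exists phi : forall U : finType, sp_obj F U -> sp_obj G U,
    (forall U : finType, bijective (phi U)) /\
    (forall (U V : finType) (f : bij U V) (x : sp_obj F U),
        phi V (sp_tr F f x) = sp_tr G f (phi U x)).

Definition postc (k : nat) (U V : finType) (f : bij U V) (l : {ffun 'I_k -> U}) :
  {ffun 'I_k -> V} := [ffun i => f (l i)].

Lemma postc_inj k (U V : finType) (f : bij U V) (l : {ffun 'I_k -> U}) :
  injectiveb l -> injectiveb (postc f l).
Proof.
move=> /injectiveP il; apply/injectiveP => i j; rewrite !ffunE.
by move/bij_inj/il.
Qed.

Definition is_bij_from (k : nat) (U : finType) (l : {ffun 'I_k -> U}) : bool :=
  injectiveb l && (#|U| == k).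

Definition Xr_obj (r : nat) (U : finType) : finType :=
  {l : {ffun 'I_r -> U} | is_bij_from l}.

Lemma postc_bij k (U V : finType) (f : bij U V) (l : {ffun 'I_k -> U}) :
  is_bij_from l -> is_bij_from (postc f l).
Proof.
by case/andP=> il c; rewrite /is_bij_from postc_inj //= -(bij_card f).
Qed.

Definition Xr_tr (r : nat) (U V : finType) (f : bij U V) (x : Xr_obj r U) :
  Xr_obj r V := exist _ (postc f (val x)) (postc_bij f (valP x)).

Definition Xr (r : nat) : species := @Species (Xr_obj r) (@Xr_tr r).

Section Molecular.
Variables (n : nat) (H : {set {perm 'I_n}}).

Definition coset_of_fun (U : finType) (l : {ffun 'I_n -> U}) :
  {set {ffun 'I_n -> U}} := [set [ffun i => l ((h : {perm 'I_n}) i)] | h in H].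

Definition is_mol (U : finType) (A : {set {ffun 'I_n -> U}}) : bool :=
  [exists l : {ffun 'I_n -> U}, is_bij_from l && (A == coset_of_fun l)].

Definition mol_obj (U : finType) : finType := {A : {set {ffun 'I_n -> U}} | is_mol A}.

Lemma mol_tr_proof (U V : finType) (f : bij U V) (A : {set {ffun 'I_n -> U}}) :
  is_mol A -> is_mol [set postc f l | l in A].
Proof.
case/existsP=> l /andP[bl /eqP->]; apply/existsP; exists (postc f l).
rewrite postc_bij //=; apply/eqP; rewrite /coset_of_fun -imset_comp.
by apply: eq_imset => h; apply/ffunP => i; rewrite !ffunE.
Qed.

Definition mol_tr (U V : finType) (f : bij U V) (x : mol_obj U) : mol_obj V :=
  exist _ [set postc f l | l in val x] (mol_tr_proof f (valP x)).

Definition mol : species := @Species mol_obj mol_tr.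
End Molecular.

(* std_next al off i : image of i under the permutation whose cycles are the
   consecutive blocks of lengths al (the first block starting at off), each
   filled in increasing order: (off, ..., off+a1-1)(off+a1, ...)... *)
Fixpoint std_next (al : seq nat) (off i : nat) : nat :=
  match al with
  | [::] => i
  | a :: al' =>
      if i < off + a then (if i.+1 < off + a then i.+1 else off)
      else std_next al' (off + a) i
  end.

Definition std_fun (n : nat) (al : seq nat) : {ffun 'I_n -> 'I_n} :=
  [ffun i : 'I_n => insubd i (std_next al 0 i)].

(* sigma_alpha in S_n (std_fun is a permutation whenever al is a partition
   of n; the default 1 is never used in that case) *)
Definition sigma_std (n : nat) (al : seq nat) : {perm 'I_n} :=
  insubd (1%g : {perm 'I_n}) (std_fun n al).

Definition Calpha (n : nat) (al : seq nat) : species :=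
  mol <[sigma_std n al]>%g.

Definition is_partition_of (al : seq nat) (n : nat) : bool :=
  [&& sorted geq al, all (fun a => 0 < a) al & sumn al == n].

Definition part_rep (al : seq nat) (r : nat) : seq nat :=
  flatten [seq nseq r a | a <- al].

Section SetBij.
Variables (U V : finType) (f : bij U V).

Lemma imsetK_bij (B : {set U}) : binv f @: (f @: B) = B.
Proof.
by rewrite -imset_comp (eq_imset _ (bfunK f)) imset_id.
Qed.

Lemma imsetKV_bij (B : {set V}) : f @: (binv f @: B) = B.
Proof.
by rewrite -imset_comp (eq_imset _ (binvK f)) imset_id.
Qed.

Definition setbij : bij {set U} {set V} :=
  @Bij _ _ (fun B : {set U} => f @: B) (fun B : {set V} => binv f @: B) imsetK_bij imsetKV_bij.

Variables (A : {set U}) (A' : {set V}).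
Hypothesis HA : forall x, (f x \in A') = (x \in A).

Lemma subbij_fwd x : x \in A -> f x \in A'.
Proof. by rewrite HA. Qed.
Lemma subbij_bwd y : y \in A' -> binv f y \in A.
Proof. by rewrite -HA binvK. Qed.

Definition subbij_f (x : {x : U | x \in A}) : {y : V | y \in A'} :=
  exist _ (f (val x)) (subbij_fwd (valP x)).
Definition subbij_g (y : {y : V | y \in A'}) : {x : U | x \in A} :=
  exist _ (binv f (val y)) (subbij_bwd (valP y)).
Lemma subbij_fK : cancel subbij_f subbij_g.
Proof. by move=> x; apply: val_inj; rewrite /= bfunK. Qed.
Lemma subbij_gK : cancel subbij_g subbij_f.
Proof. by move=> y; apply: val_inj; rewrite /= binvK. Qed.

Definition subbij : bij {x : U | x \in A} {y : V | y \in A'} :=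
  Bij subbij_fK subbij_gK.
End SetBij.

Definition part_type (U : finType) : finType :=
  {P : {set {set U}} | partition P [set: U]}.
Definition blocks (U : finType) (p : part_type U) : finType :=
  {B : {set U} | B \in val p}.
Definition elts (U : finType) (B : {set U}) : finType := {x : U | x \in B}.

Section Composition.
Variables (F G : species).

Definition comp_fiber (U : finType) (p : part_type U) : finType :=
  (sp_obj F (blocks p) * {dffun forall B : blocks p, sp_obj G (elts (val B))})%type.

Definition comp_obj (U : finType) : finType := {p : part_type U & comp_fiber p}.

Section Transport.
Variables (U V : finType) (f : bij U V).

Lemma part_tr_proof (P : {set {set U}}) :
  partition P [set: U] -> partition [set f @: (B : {set U}) | B in P] [set: V].
Proof.
have -> : [set: V] = f @: [set: U].
  apply/setP=> y; rewrite inE; apply/esym/imsetP; exists (binv f y) => //.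
  by rewrite binvK.
by rewrite imset_partition //; exact: bij_inj.
Qed.

Definition part_tr (p : part_type U) : part_type V :=
  exist _ [set f @: (B : {set U}) | B in val p] (part_tr_proof (valP p)).

Lemma blocks_cond (p : part_type U) (B : {set U}) :
  (setbij f B \in val (part_tr p)) = (B \in val p).
Proof. by rewrite /= mem_imset //; apply: imset_inj; exact: bij_inj. Qed.

Definition blocks_bij (p : part_type U) : bij (blocks p) (blocks (part_tr p)) :=
  subbij (@blocks_cond p).

Lemma elts_cond (p : part_type U) (B' : blocks (part_tr p)) (x : U) :
  (f x \in val B') = (x \in val (binv (blocks_bij p) B')).
Proof.
rewrite -{1}(binvK (blocks_bij p) B') /=.
by rewrite mem_imset //; exact: bij_inj.
Qed.

Definition comp_tr (x : comp_obj U) : comp_obj V :=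
  let p := tag x in
  let bb := blocks_bij p in
  existT (@comp_fiber V) (part_tr p)
    (sp_tr F bb (tagged x).1,
     @finfun (blocks (part_tr p)) (fun B' => sp_obj G (elts (val B')))
       (fun B' => sp_tr G (subbij (@elts_cond p B')) ((tagged x).2 (binv bb B')))).
End Transport.

Definition species_comp : species := @Species comp_obj comp_tr.
End Composition.
Arguments species_comp : clear implicits.
Arguments mol : clear implicits.
Arguments Calpha : clear implicits.
Arguments Xr : clear implicits.

(* Main.v *)
Require Import Defs.
From HB Require Import structures.
From mathcomp Require Import all_boot all_fingroup.
From mathcomp Require Import zify.
Set Implicit Arguments. Unset Strict Implicit. Unset Printing Implicit Defensive.
Lemma bij_from_inj k (X : finType) (l : {ffun 'I_k -> X}) : is_bij_from l -> injective l.
Proof. by case/andP => /injectiveP. Qed.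

Lemma bij_from_card k (X : finType) (l : {ffun 'I_k -> X}) : is_bij_from l -> #|X| = k.
Proof. by case/andP => _ /eqP. Qed.

Lemma bij_from_onto k (X : finType) (l : {ffun 'I_k -> X}) : is_bij_from l ->
  forall y, exists t, y = l t.
Proof.
move=> b y.
have hc : #|'I_k| >= #|X| by rewrite card_ord (bij_from_card b).
have [g lK gK] := inj_card_bij (bij_from_inj b) hc.
by exists (g y); rewrite gK.
Qed.

Lemma coset_shift n (H : {group {perm 'I_n}}) (U : finType) (h : {perm 'I_n}) (l : {ffun 'I_n -> U}) :
  h \in H -> coset_of_fun H [ffun i => l (h i)] = coset_of_fun H l.
Proof.
move=> hH; rewrite /coset_of_fun.
have -> : [set [ffun i => [ffun i0 => l (h i0)] ((h0 : {perm 'I_n}) i)] | h0 in H] =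
          [set [ffun i => l ((g : {perm 'I_n}) i)] | g in (fun g => g * h)%g @: H].
  rewrite -imset_comp; apply: eq_imset => g /=; apply/ffunP => i; by rewrite !ffunE permM.
by rewrite -[[set (g * h)%g | g in H]]/(rcoset H h) rcosetE rcoset_id.
Qed.

Section Core.
Variables (n r N : nat) (s : {perm 'I_n}) (s' : {perm 'I_N}).
Variables (E : 'I_n * 'I_r -> 'I_N) (Einv : 'I_N -> 'I_n * 'I_r).
Hypotheses (EK : cancel E Einv) (EinvK : cancel Einv E).
Hypothesis Ecomm : forall t j, s' (E (t, j)) = E (s t, j).
Hypothesis r_gt0 : 0 < r.

Lemma Eexp k t j : (s' ^+ k)%g (E (t, j)) = E ((s ^+ k)%g t, j).
Proof.
elim: k t => [|k IH] t; first by rewrite !expg0 !perm1.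
by rewrite !expgS !permM Ecomm IH.
Qed.

Lemma NnR : N = n * r.
Proof.
have := bij_eq_card (Bijective EK EinvK).
by rewrite card_prod !card_ord.
Qed.

Definition mu (U : finType) (p : part_type U) (l : {ffun 'I_n -> blocks p})
  (L : {dffun forall B : blocks p, Xr_obj r (elts (val B))}) : {ffun 'I_N -> U} :=
  [ffun q => val (val (L (l (Einv q).1)) (Einv q).2)].

Lemma muE U (p : part_type U) (l : {ffun 'I_n -> blocks p}) (L : {dffun forall B : blocks p, Xr_obj r (elts (val B))}) t j : mu l L (E (t, j)) = val (val (L (l t)) j) :> U.
Proof. by rewrite ffunE EK. Qed.

Lemma mu_shift U (p : part_type U) (l : {ffun 'I_n -> blocks p}) (L : {dffun forall B : blocks p, Xr_obj r (elts (val B))}) k :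
  [ffun q => mu l L ((s' ^+ k)%g q)] = mu [ffun i => l ((s ^+ k)%g i)] L.
Proof.
apply/ffunP => q; rewrite -(EinvK q); case: (Einv q) => t j.
by rewrite ffunE Eexp !muE ffunE.
Qed.

Lemma coset_mu U (p : part_type U) (l : {ffun 'I_n -> blocks p}) (L : {dffun forall B : blocks p, Xr_obj r (elts (val B))}) :
  [set mu l' L | l' in coset_of_fun <[s]>%g l] = coset_of_fun <[s']>%g (mu l L).
Proof.
rewrite /coset_of_fun -imset_comp; apply/setP => m; apply/imsetP/imsetP.
- case=> h /cycleP [k ->] ->; exists (s' ^+ k)%g; first exact: mem_cycle.
  by rewrite /= mu_shift.
- case=> h /cycleP [k ->] ->; exists (s ^+ k)%g; first exact: mem_cycle.
  by rewrite /= -mu_shift.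
Qed.

Lemma block_img U (p : part_type U) (B : blocks p) (L : Xr_obj r (elts (val B))) :
  val B = [set val (val L j) | j : 'I_r].
Proof.
apply/setP => u; apply/idP/imsetP.
  move=> uB; have [j ej] := bij_from_onto (valP L) (exist _ u uB).
  by exists j => //; rewrite -ej.
by case=> j _ ->; exact: (valP (val L j)).
Qed.

Lemma mu_block U (p : part_type U) (l : {ffun 'I_n -> blocks p}) (L : {dffun forall B : blocks p, Xr_obj r (elts (val B))}) t :
  val (l t) = [set mu l L (E (t, j)) | j : 'I_r].
Proof.
rewrite (block_img (L (l t))); apply: eq_imset => j; by rewrite muE.
Qed.

Lemma part_img U (p : part_type U) (l : {ffun 'I_n -> blocks p}) : is_bij_from l ->
  val p = [set val (l t) | t : 'I_n].
Proof.
move=> bl; apply/setP => B; apply/idP/imsetP.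
  move=> hB; have [t et] := bij_from_onto bl (exist _ B hB).
  by exists t => //; rewrite -et.
by case=> t _ ->; exact: (valP (l t)).
Qed.

Lemma card_block U (p : part_type U) (L : {dffun forall B : blocks p, Xr_obj r (elts (val B))})
  A : A \in val p -> #|A| = r.
Proof.
move=> hA; have := bij_from_card (valP (L (exist _ A hA))).
by rewrite card_sig.
Qed.

Lemma mu_bij U (p : part_type U) (l : {ffun 'I_n -> blocks p}) (L : {dffun forall B : blocks p, Xr_obj r (elts (val B))}) : is_bij_from l -> is_bij_from (mu l L).
Proof.
move=> bl; apply/andP; split.
  apply/injectiveP => q q'; rewrite -(EinvK q) -(EinvK q').
  case: (Einv q) => t j; case: (Einv q') => t' j'; rewrite !muE => e.
  have htt : l t = l t'.
    have P := valP p; case/and3P: P => _ tP _.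
    apply: val_inj; rewrite -(def_pblock tP (valP (l t)) (valP (val (L (l t)) j))).
    by rewrite e (def_pblock tP (valP (l t')) (valP (val (L (l t')) j'))).
  have ett := bij_from_inj bl htt; subst t'.
  by have /val_inj/(bij_from_inj (valP (L (l t)))) -> := e.
rewrite NnR -cardsT (card_partition (valP p)) /=.
rewrite (eq_bigr (fun _ => r)); last by move=> A hA; exact: card_block hA.
rewrite sum_nat_const; apply/eqP; congr (_ * _).
have := bij_from_card bl; rewrite card_sig => <-.
by apply: eq_card.
Qed.

Definition phi_set U (x : comp_obj (mol n <[s]>%g) (Xr r) U) : {set {ffun 'I_N -> U}} :=
  [set mu l (tagged x).2 | l in val (tagged x).1].

Lemma phi_mol U (x : comp_obj (mol n <[s]>%g) (Xr r) U) : is_mol <[s']>%g (phi_set x).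
Proof.
case: x => p [[A hA] L]; rewrite /phi_set /=.
case/existsP: hA => l /andP[bl /eqP eA]; subst A.
apply/existsP; exists (mu l L); by rewrite mu_bij //= coset_mu eqxx.
Qed.

Definition phi U (x : comp_obj (mol n <[s]>%g) (Xr r) U) : mol_obj <[s']>%g U :=
  exist _ (phi_set x) (phi_mol x).

Lemma phi_nat (U V : finType) (f : bij U V) (x : comp_obj (mol n <[s]>%g) (Xr r) U) :
  phi (sp_tr (species_comp (mol n <[s]>%g) (Xr r)) f x) = sp_tr (mol N <[s']>%g) f (phi x).
Proof.
apply: val_inj; case: x => p [[A hA] L].
rewrite /= /phi_set /= -!imset_comp; apply: eq_imset => l /=.
apply/ffunP => q; rewrite !ffunE /=.
have H : forall B B' : blocks p, B = B' -> val (val (L B) (Einv q).2) = val (val (L B') (Einv q).2) :> U by move=> ? ? ->.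
congr (f _); apply: H; exact: subbij_fK.
Qed.


Lemma phi_inj U : injective (@phi U).
Proof.
move=> [p1 [[A1 hA1] L1]] [p2 [[A2 hA2] L2]] /(congr1 val) /=; rewrite /phi_set /=.
have hA1' := hA1; have hA2' := hA2.
case/existsP: hA1' => l1 /andP[b1 /eqP e1]; case/existsP: hA2' => l2 /andP[b2 /eqP e2].
rewrite {1}e1 {1}e2 !coset_mu => heq.
have : mu l2 L2 \in coset_of_fun <[s']>%g (mu l1 L1).
  by rewrite heq /coset_of_fun; apply/imsetP; exists 1%g => //; apply/ffunP => q; rewrite !ffunE perm1.
case/imsetP => h /cycleP [k ->]; rewrite mu_shift.
set l1' := [ffun i => l1 ((s ^+ k)%g i)] => hmu.
have b1' : is_bij_from l1'.
  apply/andP; split; last by case/andP: b1.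
  apply/injectiveP => i i'; rewrite !ffunE => /(bij_from_inj b1); exact: perm_inj.
have hA1l : A1 = coset_of_fun <[s]>%g l1' by rewrite e1 coset_shift // mem_cycle.
have hp : p1 = p2.
  apply: val_inj; rewrite (part_img b1') (part_img b2).
  apply: eq_imset => t; by rewrite !(mu_block _ L1) !(mu_block _ L2) hmu.
subst p2.
have hl : l2 = l1'.
  apply/ffunP => t; apply: val_inj; by rewrite (mu_block l1' L1) (mu_block l2 L2) hmu.
subst l2.
have hL : L1 = L2.
  apply/ffunP => B; have [t ->] := bij_from_onto b1' B.
  apply: val_inj; apply/ffunP => j; apply: val_inj.
  by rewrite -!muE hmu.
subst L2.
have hA : A1 = A2 by rewrite hA1l e2.
have hA3 : exist (fun A => is_mol <[s]>%g A) A1 hA1 = exist _ A2 hA2 by apply: val_inj.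
by rewrite hA3.
Qed.


Section Surj.
Variables (U : finType) (m : {ffun 'I_N -> U}) (minv : U -> 'I_N).
Hypotheses (mK : cancel m minv) (minvK : cancel minv m).

Let j0 : 'I_r := Ordinal r_gt0.
Definition cls (u : U) : 'I_n := (Einv (minv u)).1.
Definition Bt (t : 'I_n) : {set U} := [set m (E (t, j)) | j : 'I_r].

Lemma memBt u t : (u \in Bt t) = (cls u == t).
Proof.
apply/imsetP/eqP => [[j _ ->]|<-]; first by rewrite /cls mK EK.
exists (Einv (minv u)).2 => //; rewrite /cls -surjective_pairing EinvK minvK //.
Qed.

Lemma Bt_inj : injective Bt.
Proof.
move=> t t' e; have : m (E (t, j0)) \in Bt t' by rewrite -e; apply: imset_f.
by rewrite memBt /cls mK EK => /eqP.
Qed.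

Definition PP : {set {set U}} := Bt @: setT.

Lemma partP : partition PP [set: U].
Proof.
apply/and3P; split.
- apply/eqP/setP => u; rewrite inE; apply/bigcupP; exists (Bt (cls u)).
    exact: imset_f.
  by rewrite memBt.
- apply/trivIsetP => A B /imsetP[t _ ->] /imsetP[t' _ ->] neq.
  rewrite -setI_eq0; apply/eqP/setP => u; rewrite !inE !memBt.
  apply/negP => /andP[/eqP e1 /eqP e2]; move: neq; by rewrite -e1 -e2 eqxx.
- apply/imsetP => [[t _ e]].
  have : m (E (t, j0)) \in Bt t by apply: imset_f.
  by rewrite -e inE.
Qed.

Definition pp : part_type U := exist _ PP partP.

Definition lam : {ffun 'I_n -> blocks pp} :=
  [ffun t => exist (fun B => B \in PP) (Bt t) (imset_f Bt (in_setT t))].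

Lemma lam_bij : is_bij_from lam.
Proof.
apply/andP; split.
  apply/injectiveP => t t'; rewrite !ffunE => /(congr1 val) /=; exact: Bt_inj.
rewrite card_sig; apply/eqP.
have -> : #|[pred x | x \in PP]| = #|PP| by apply: eq_card.
by rewrite card_imset ?cardsT ?card_ord //; exact: Bt_inj.
Qed.

Lemma ex_tB (B : blocks pp) : exists t, val B == Bt t.
Proof. by case/imsetP: (valP B) => t _ ->; exists t. Qed.

Definition tB (B : blocks pp) : 'I_n := xchoose (ex_tB B).

Lemma tB_spec B : val B = Bt (tB B).
Proof. by apply/eqP; exact: (xchooseP (ex_tB B)). Qed.

Lemma Lin (B : blocks pp) j : m (E (tB B, j)) \in val B.
Proof. by rewrite tB_spec; apply: imset_f. Qed.

Definition Lf (B : blocks pp) : {ffun 'I_r -> elts (val B)} :=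
  [ffun j => exist (fun u => u \in val B) (m (E (tB B, j))) (Lin B j)].

Lemma Lf_bij B : is_bij_from (Lf B).
Proof.
apply/andP; split.
  apply/injectiveP => j j'; rewrite !ffunE => /(congr1 val) /=.
  by move/(can_inj mK)/(can_inj EK) => [].
rewrite card_sig; apply/eqP.
have -> : #|[pred x | x \in val B]| = #|val B| by apply: eq_card.
rewrite tB_spec card_imset ?card_ord //.
by move=> j j' /(can_inj mK)/(can_inj EK) [].
Qed.

Definition Lx : {dffun forall B : blocks pp, Xr_obj r (elts (val B))} :=
  @finfun (blocks pp) (fun B => Xr_obj r (elts (val B)))
    (fun B => exist (fun l => is_bij_from l) (Lf B) (Lf_bij B)).

Lemma Lx_val B j : val (val (Lx B) j) = m (E (tB B, j)) :> U.
Proof. by rewrite /Lx ffunE /= ffunE. Qed.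

Lemma tB_lam t : tB (lam t) = t.
Proof. apply: Bt_inj; by rewrite -tB_spec ffunE. Qed.

Lemma mu_lam : mu lam Lx = m.
Proof.
apply/ffunP => q; rewrite -(EinvK q); case: (Einv q) => t j.
by rewrite muE Lx_val tB_lam.
Qed.

Lemma Amol_proof : is_mol <[s]>%g (coset_of_fun <[s]>%g lam).
Proof. by apply/existsP; exists lam; rewrite lam_bij eqxx. Qed.

Definition xx : comp_obj (mol n <[s]>%g) (Xr r) U :=
  existT _ pp (exist _ (coset_of_fun <[s]>%g lam) Amol_proof, Lx).

Lemma phi_xx : phi_set xx = coset_of_fun <[s']>%g m.
Proof. by rewrite /phi_set /= coset_mu mu_lam. Qed.

End Surj.

Lemma phi_surj U (y : mol_obj <[s']>%g U) : exists x, phi x = y.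
Proof.
case: y => Y hY; have hY' := hY; case/existsP: hY' => m /andP[bm /eqP eY].
have hc : #|'I_N| >= #|U| by rewrite card_ord (bij_from_card bm).
have [minv mK minvK] := inj_card_bij (bij_from_inj bm) hc.
exists (xx mK minvK); apply: val_inj => /=; by rewrite phi_xx.
Qed.

Lemma core_iso : species_iso (species_comp (mol n <[s]>%g) (Xr r)) (mol N <[s']>%g).
Proof.
exists phi; split; last exact: phi_nat.
move=> U; apply: inj_card_bij; first exact: phi_inj.
rewrite -(card_codom (@phi_inj U)); apply: subset_leq_card; apply/subsetP => y _.
by have [x <-] := phi_surj y; apply: codom_f.
Qed.

End Core.
Lemma std_next_range al off t : off <= t < off + sumn al ->
  off <= std_next al off t < off + sumn al.
Proof.
elim: al off => [|a al IH] off /=; first by lia.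
move=> H; have I := IH (off + a).
repeat case: ifP => ?; lia.
Qed.

Lemma std_next_inj al off t t' : off <= t < off + sumn al -> off <= t' < off + sumn al ->
  std_next al off t = std_next al off t' -> t = t'.
Proof.
elim: al off => [|a al IH] off /=; first by lia.
move=> H H'; have R1 := @std_next_range al (off+a) t; have R2 := @std_next_range al (off+a) t'.
have I := IH (off + a).
repeat case: ifP => ?; lia.
Qed.

Lemma std_next_cat s1 s2 off i : off <= i ->
  std_next (s1 ++ s2) off i =
  if i < off + sumn s1 then std_next s1 off i else std_next s2 (off + sumn s1) i.
Proof.
elim: s1 off => [|a s1 IH] off /= H; first by rewrite addn0 ltnNge H.
case: ifP => h1 /=.
  by have -> : i < off + (a + sumn s1) by lia.
rewrite IH; last by lia.
by rewrite addnA.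
Qed.

Lemma nseq_next r a off c s : c < r -> s < a ->
  std_next (nseq r a) off (off + c * a + s) = off + c * a + (if s.+1 < a then s.+1 else 0).
Proof.
elim: r off c => [|r IH] off c //= Hc Hs.
case: c Hc => [|c] Hc.
  rewrite mul0n addn0 /=; repeat case: ifP => ?; lia.
have -> : off + c.+1 * a + s = off + a + c * a + s by rewrite mulSn; lia.
have -> : (off + a + c * a + s < off + a) = false by lia.
rewrite IH //; rewrite mulSn; lia.
Qed.

Lemma sumn_part_rep al r : sumn (part_rep al r) = r * sumn al.
Proof.
elim: al => [|a al IH] /=; first by rewrite muln0.
by rewrite /part_rep /= sumn_cat -/(part_rep al r) IH sumn_nseq mulnDr mulnC.
Qed.

Fixpoint dec (r : nat) (al : seq nat) (off off' t j : nat) : nat :=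
  match al with
  | [::] => 0
  | a :: al' => if t < off + a then off' + j * a + (t - off)
                else dec r al' (off + a) (off' + r * a) t j
  end.

Lemma dec_range r al off off' t j : off <= t < off + sumn al -> j < r ->
  off' <= dec r al off off' t j < off' + r * sumn al.
Proof.
elim: al off off' => [|a al IH] off off' /=; first by lia.
move=> H Hj; case: ifP => h1; first by nia.
have := IH (off + a) (off' + r * a); nia.
Qed.

Lemma dec_inj r al off off' t j t' j' : off <= t < off + sumn al -> j < r ->
  off <= t' < off + sumn al -> j' < r ->
  dec r al off off' t j = dec r al off off' t' j' -> t = t' /\ j = j'.
Proof.
elim: al off off' => [|a al IH] off off' /=; first by lia.
move=> H Hj H' Hj'; case: ifP => h1; case: ifP => h1'.
- move=> E; suff : j = j' by lia.
  apply/eqP; rewrite eqn_leq; apply/andP; split; rewrite leqNgt; apply/negP => lt; nia.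
- have := @dec_range r al (off+a) (off'+r*a) t' _ _ Hj'; nia.
- have := @dec_range r al (off+a) (off'+r*a) t _ _ Hj; nia.
- apply: IH; lia.
Qed.

Lemma dec_comm r al off off' t j : off <= t < off + sumn al -> j < r ->
  std_next (part_rep al r) off' (dec r al off off' t j) = dec r al off off' (std_next al off t) j.
Proof.
elim: al off off' => [|a al IH] off off' /=; first by lia.
move=> H Hj; rewrite /part_rep /= -/(part_rep al r).
case: ifP => h1.
  rewrite std_next_cat; last by lia.
  rewrite sumn_nseq ifT; last by nia.
  rewrite nseq_next //; last by lia.
  by case h2: (t.+1 < off + a); case h3: ((t - off).+1 < a); repeat case: ifP => ?; lia.
have Hd := @dec_range r al (off+a) (off'+r*a) t j.
rewrite std_next_cat; last by lia.
rewrite sumn_nseq.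
have -> : (dec r al (off + a) (off' + r * a) t j < off' + a * r) = false by lia.
have Hr := @std_next_range al (off+a) t.
have -> : (std_next al (off + a) t < off + a) = false by lia.
by rewrite mulnC IH //; lia.
Qed.

Lemma std_fun_inj n al : sumn al = n -> injectiveb (std_fun n al).
Proof.
move=> Hn; apply/injectiveP => i i'; rewrite !ffunE => /(congr1 val).
have Ri := @std_next_range al 0 i; have Ri' := @std_next_range al 0 i'.
have hi := ltn_ord i; have hi' := ltn_ord i'.
have k1 : std_next al 0 i \in (fun m => m < n) by rewrite /in_mem /=; lia.
have k2 : std_next al 0 i' \in (fun m => m < n) by rewrite /in_mem /=; lia.
rewrite (insubdK _ k1) (insubdK _ k2).
move/std_next_inj => h; apply: val_inj; apply: h; lia.
Qed.

Lemma sigma_std_val n al (Hn : sumn al = n) (t : 'I_n) :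
  val (sigma_std n al t) = std_next al 0 t.
Proof.
have Rt := @std_next_range al 0 t; have ht := ltn_ord t.
have k0 : std_fun n al \in (fun f : {ffun 'I_n -> 'I_n} => injectiveb f) by rewrite /in_mem /= std_fun_inj.
rewrite /sigma_std -pvalE (insubdK _ k0).
have k1 : std_next al 0 t \in (fun m => m < n) by rewrite /in_mem /=; lia.
by rewrite ffunE (insubdK _ k1).
Qed.

Lemma dec_lt n r al (Hn : sumn al = n) (p : 'I_n * 'I_r) : dec r al 0 0 p.1 p.2 < n * r.
Proof.
have := @dec_range r al 0 0 p.1 p.2; case: p => t j /=.
have := ltn_ord t; have := ltn_ord j; lia.
Qed.

Theorem mainTheorem1 (n : nat) (al : seq nat) (r : nat) :
  is_partition_of al n -> 1 <= r ->
  species_iso (species_comp (Calpha n al) (Xr r)) (Calpha (n * r) (part_rep al r)).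
Proof.
case/and3P => _ _ /eqP Hn r1.
have Hn' : sumn (part_rep al r) = n * r by rewrite sumn_part_rep Hn mulnC.
pose E (p : 'I_n * 'I_r) : 'I_(n * r) := Ordinal (dec_lt Hn p).
have Einj : injective E.
  move=> [t j] [t' j'] /(congr1 val) /= e.
  have := @dec_inj r al 0 0 t j t' j'.
  have := ltn_ord t; have := ltn_ord j; have := ltn_ord t'; have := ltn_ord j'.
  rewrite Hn => h1 h2 h3 h4 /(_ _ h3 _ h1) [] //; try lia.
  by move=> /val_inj -> /val_inj ->.
have hc : #|{: 'I_n * 'I_r}| >= #|'I_(n * r)| by rewrite card_prod !card_ord.
have [Einv EK EinvK] := inj_card_bij Einj hc.
apply: (core_iso EK EinvK) => //.
move=> t j; apply: val_inj => /=.
have ht := ltn_ord t; have hj := ltn_ord j.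
have k : 0 <= t < 0 + sumn al by rewrite Hn.
rewrite sigma_std_val // (@dec_comm r al 0 0 t j k hj) sigma_std_val //.
Qed.
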